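(* Let $\alpha > 1$ and let $H$ be a $k$-uniform hypergraph with $\lambda_\alpha(H) \ge \left(k!\binom{x}{k}\right)^{1-1/\alpha}$ for some real $x \ge k-1$. Then $e(\partial H) \ge \binom{x}{k-1}$.
   Context: For real $x$, $\binom{x}{m} = x(x-1)\cdots(x-m+1)/m!$. The shadow $\partial H$ of a $k$-uniform hypergraph $H$ is the $(k-1)$-uniform hypergraph consisting of all $(k-1)$-sets contained in some edge of $H$; $e(\cdot)$ denotes number of edges. For $H$ on $[n]$, $\tau_H(x,\dots,x) = k!\sum_{\{i_1,\dots,i_k\}\in E(H)} x_{i_1}\cdots x_{i_k}$ and $\lambda_\alpha(H) = \max\{\tau_H(x,\dots,x) : \|x\|_\alpha=1\}$, where $\|x\|_\alpha = (\sum_i|x_i|^\alpha)^{1/\alpha}$. *)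

(* Defs.v *)
From HB Require Import structures.
From mathcomp Require Import all_boot all_order all_algebra.
From mathcomp Require Import all_classical all_reals all_analysis.
Set Implicit Arguments. Unset Strict Implicit. Unset Printing Implicit Defensive.
Import Order.TTheory GRing.Theory Num.Theory.
Local Open Scope ring_scope.

Definition binomr (R : realType) (x : R) (m : nat) : R :=
  (\prod_(i < m) (x - i%:R)) / (m`!)%:R.

Definition uniform (n k : nat) (E : {set {set 'I_n}}) : Prop :=
  forall e, e \in E -> #|e| = k.

Definition shadow (n k : nat) (E : {set {set 'I_n}}) : {set {set 'I_n}} :=
  [set S : {set 'I_n} | (#|S| == k.-1) && [exists e in E, S \subset e]].

(* tau_H(x,...,x) = k! * sum_{edges} prod x_i *)
Definition tauH (R : realType) (n k : nat) (E : {set {set 'I_n}}) (x : 'I_n -> R) : R :=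
  (k`!)%:R * \sum_(e in E) \prod_(i in e) x i.

Definition anorm (R : realType) (n : nat) (a : R) (x : 'I_n -> R) : R :=
  (\sum_(i < n) `|x i| `^ a) `^ a^-1.

(* lambda_alpha(H) = max { tau_H(x) : ||x||_alpha = 1 } (taken as a supremum) *)
Definition lambda_alpha (R : realType) (n k : nat) (a : R) (E : {set {set 'I_n}}) : R :=
  sup [set t : R | exists x : 'I_n -> R, anorm a x = 1 /\ t = tauH k E x].

(* Main.v *)
Require Import Defs.
From HB Require Import structures.
From mathcomp Require Import all_boot all_order all_algebra.
Import Order.TTheory GRing.Theory Num.Theory.
Set Implicit Arguments. Unset Strict Implicit. Unset Printing Implicit Defensive.

Section Comb.
Variable n : nat.
Implicit Types (G F : {set {set 'I_n}}) (v : 'I_n).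

Definition link v G := (fun e => e :\ v) @: [set e in G | v \in e].

Lemma card_link v G : #|link v G| = #|[set e in G | v \in e]|.
Proof.
apply: card_in_imset => e1 e2; rewrite !inE => /andP[_ h1] /andP[_ h2] h.
by rewrite -(setD1K h1) -(setD1K h2) h.
Qed.

Lemma link_uniform k v G : uniform k G -> uniform k.-1 (link v G).
Proof.
move=> uG S /imsetP[e]; rewrite inE => /andP[eG ve] ->.
by have := cardsD1 v e; rewrite ve (uG e eG) => ->.
Qed.

Lemma link_sub k v G : uniform k G ->
  {subset link v G <= [set S in shadow k G | v \notin S]}.
Proof.
move=> uG S SL; have := link_uniform (v:=v) uG SL.
case/imsetP: SL => e; rewrite inE => /andP[eG ve] -> cS.
rewrite inE setD11 andbT inE cS eqxx /=; apply/existsP; exists e.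
by rewrite eG subD1set.
Qed.

Lemma shadow_link k v G : (2 <= k)%N -> uniform k G ->
  (#|shadow k.-1 (link v G)| <= #|[set S in shadow k G | v \in S]|)%N.
Proof.
move=> k2 uG.
have vT : forall T, T \in shadow k.-1 (link v G) -> v \notin T.
  move=> T; rewrite inE => /andP[_ /existsP[S /andP[SL TS]]].
  apply/negP => vT; have := link_sub (v:=v) uG SL; rewrite inE => /andP[_ /negP]; apply.
  exact: (subsetP TS).
rewrite -(@card_in_imset _ _ (fun T => v |: T)); last first.
  move=> T1 T2 h1 h2 /= h.
  by rewrite -(setU1K (vT _ h1)) -(setU1K (vT _ h2)) h.
apply: subset_leq_card; apply/subsetP => U /imsetP[T Tsh ->].
have vnT := vT _ Tsh.
have := Tsh; rewrite inE => /andP[cT /existsP[S /andP[SL TS]]].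
rewrite inE setU11 andbT inE cardsU1 vnT (eqP cT) add1n.
have hk : (k.-1.-1).+1 = k.-1 by case: (k) k2 => [|[|]].
rewrite hk eqxx /=.
move: SL; case/imsetP => e; rewrite inE => /andP[eG ve] eS.
apply/existsP; exists e; rewrite eG /= subUset sub1set ve /=.
by apply: subset_trans TS _; rewrite eS subD1set.
Qed.

Lemma degsum r F : uniform r F ->
  (\sum_(v : 'I_n) #|[set e in F | v \in e]| = r * #|F|)%N.
Proof.
move=> uF.
have h1 : forall v, #|[set e in F | v \in e]| = (\sum_(e in F) (v \in e))%N.
  move=> v; rewrite -sum1_card big_mkcond [RHS]big_mkcond /=.
  by apply: eq_bigr => e _; rewrite inE; case: (e \in F); case: (v \in e).
under eq_bigr do rewrite h1.
rewrite exchange_big /=.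
rewrite (eq_bigr (fun=> r)); first by rewrite sum_nat_const mulnC.
move=> e eF; rewrite -(uF e eF) -sum1_card [RHS]big_mkcond /=.
by apply: eq_bigr => v _; case: (v \in e).
Qed.

Lemma shadow_uniform k G : uniform k.-1 (shadow k G).
Proof. by move=> S; rewrite inE => /andP[/eqP]. Qed.

Lemma shadow_nonempty k G : (1 <= k)%N -> uniform k G -> (0 < #|G|)%N ->
  (0 < #|shadow k G|)%N.
Proof.
move=> k1 uG /card_gt0P[e eG].
have : (0 < #|e|)%N by rewrite (uG e eG).
case/card_gt0P => v ve.
apply/card_gt0P; exists (e :\ v); rewrite inE.
have := cardsD1 v e; rewrite ve (uG e eG) => ->; rewrite eqxx /=.
by apply/existsP; exists e; rewrite eG subD1set.
Qed.

Lemma card_split v (A : {set {set 'I_n}}) :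
  (#|[set S in A | v \notin S]| + #|[set S in A | v \in S]| = #|A|)%N.
Proof.
rewrite -(cardsID [set S : {set 'I_n} | v \in S] A) addnC; congr (_ + _);
  by apply: eq_card => S; rewrite !inE // andbC.
Qed.
End Comb.

From mathcomp Require Import all_classical all_reals all_analysis.
From mathcomp Require Import ring lra.
Import Order.TTheory GRing.Theory Num.Theory.
Import numFieldNormedType.Exports.
Local Open Scope ring_scope.

Section Binom.
Variable R : realType.
Implicit Types x : R.

Lemma binomr0 x : binomr x 0 = 1.
Proof. by rewrite /binomr big_ord0 fact0 divr1. Qed.

Lemma binomrS x j : binomr x j.+1 = binomr x j * (x - j%:R) / j.+1%:R.
Proof.
rewrite /binomr big_ord_recr /= factS natrM.
have h1 : (j`!)%:R != 0 :> R by rewrite pnatr_eq0 -lt0n fact_gt0.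
have h2 : (j.+1)%:R != 0 :> R by rewrite pnatr_eq0.
by field; apply/andP.
Qed.

Lemma binomr_ge0 x j : (j.-1)%:R <= x -> 0 <= binomr x j.
Proof.
move=> hx; rewrite /binomr divr_ge0 // prodr_ge0 // => i _.
rewrite subr_ge0 (le_trans _ hx) // ler_nat; case: j i hx => [[]//|j] i /= _.
by rewrite -ltnS.
Qed.

Lemma binomr_zero j : binomr (j%:R : R) j.+1 = 0.
Proof. by rewrite binomrS subrr mulr0 mul0r. Qed.

Lemma binomr_pascal x j :
  binomr x j.+1 = binomr (x - 1) j.+1 + binomr (x - 1) j.
Proof.
have H : forall m, binomr x m.+1 = binomr (x - 1) m * x / m.+1%:R.
  move=> m; rewrite /binomr big_ord_recl /= subr0 factS natrM.
  rewrite (eq_bigr (fun i : 'I_m => x - 1 - i%:R)); last first.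
    by move=> i _; rewrite /bump leq0n add1n -addn1 natrD; ring.
  have h1 : (m`!)%:R != 0 :> R by rewrite pnatr_eq0 -lt0n fact_gt0.
  have h2 : (m.+1)%:R != 0 :> R by rewrite pnatr_eq0.
  by field; apply/andP.
rewrite H binomrS.
have h : j.+1%:R != 0 :> R by rewrite pnatr_eq0.
rewrite -natr1; have h' : j%:R + 1 != 0 :> R by rewrite natr1.
by field.
Qed.

Lemma prod_cont j : continuous (fun x : R => \prod_(i < j) (x - i%:R)).
Proof.
elim: j => [|j IH].
  have -> : (fun z : R => \prod_(i < 0) (z - i%:R)) = fun=> 1.
    by apply: funext => z; rewrite big_ord0.
  exact: cst_continuous.
have -> : (fun z : R => \prod_(i < j.+1) (z - i%:R)) =
   (fun z => (\prod_(i < j) (z - i%:R)) * (z - j%:R)).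
  by apply: funext => z; rewrite big_ord_recr.
move=> x.
have H2 : {for x, continuous (fun z : R => z - j%:R)}.
  apply: continuousB; [exact: cvg_id|exact: cst_continuous].
exact: (continuousM (IH x) H2).
Qed.

Lemma binomr_cont j : continuous (fun x : R => binomr x j).
Proof.
have -> : (fun x : R => binomr x j) =
  (fun x => (\prod_(i < j) (x - i%:R)) * (j`!%:R)^-1) by [].
move=> x.
have H2 : {for x, continuous (fun z : R => ((j`!)%:R)^-1 : R)} by exact: cst_continuous.
exact: (continuousM (@prod_cont j x) H2).
Qed.
End Binom.

Section KK.
Variable R : realType.
Variable n : nat.

Theorem KK j : forall (G : {set {set 'I_n}}) (x : R),
  uniform j.+1 G -> (0 < #|G|)%N -> j%:R <= x ->
  binomr x j.+1 <= #|G|%:R -> binomr x j <= #|shadow j.+1 G|%:R.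
Proof.
elim: j => [|j IH] G x uG G0 hx hm.
  by rewrite binomr0 ler1n shadow_nonempty.
set s := #|shadow j.+2 G|.
rewrite leNgt; apply/negP => hs.
pose d v := #|[set e in G | v \in e]|.
pose d' v := #|[set S in shadow j.+2 G | v \in S]|.
have hx' : 0 <= x - (j.+1)%:R by rewrite subr_ge0.
have claim : forall v : 'I_n, (j.+1)%:R * (d v)%:R <= (x - (j.+1)%:R) * (d' v)%:R.
  move=> v.
  have hsum : (d v + d' v <= s)%N.
    rewrite /s /d /d' -(card_split v (shadow j.+2 G)) leq_add2r -card_link.
    apply: fintype.subset_leq_card; apply/fintype.subsetP => S; exact: link_sub.
  have hsh : (#|shadow j.+1 (link v G)| <= d' v)%N := shadow_link v (isT : (2 <= j.+2)%N) uG.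
  have uL : uniform j.+1 (link v G) := link_uniform (v:=v) uG.
  case: (posnP (d v)) => [->|dpos]; first by rewrite mulr0 mulr_ge0.
  have L0 : (0 < #|link v G|)%N by rewrite card_link.
  case: (leP (binomr (x - 1) j.+1) (d v)%:R) => hd.
    have hx1 : j%:R <= x - 1 by move: hx; rewrite -natr1; lra.
    have := IH (link v G) (x - 1) uL L0 hx1; rewrite card_link => /(_ hd) h.
    have h2 : binomr (x - 1) j <= (d' v)%:R by apply: (le_trans h); rewrite ler_nat.
    have h3 : (d v + d' v)%:R <= s%:R :> R by rewrite ler_nat.
    move: hs; rewrite binomr_pascal natrD in h3 *; move=> hs.
    have : binomr (x - 1) j.+1 + binomr (x - 1) j <= s%:R :> R.
      by apply: le_trans h3; apply: lerD.
    by rewrite leNgt hs.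
  have hab : j%:R <= x - 1 by move: hx; rewrite -natr1; lra.
  have [z zin hz] : exists2 z, z \in `[j%:R, x - 1] & binomr z j.+1 = (d v)%:R.
    apply: IVT => //; first exact/continuous_subspaceT/binomr_cont.
    rewrite binomr_zero; apply/andP; split.
      by rewrite ge_min ler0n.
    by rewrite le_max (ltW hd) orbT.
  move: zin; rewrite in_itv /= => /andP[zj zx].
  have := IH (link v G) z uL L0 zj; rewrite card_link -hz lexx => /(_ isT) h.
  have h2 : binomr z j <= (d' v)%:R by apply: (le_trans h); rewrite ler_nat.
  rewrite binomrS mulrC divfK ?pnatr_eq0 // mulrC.
  have hb : 0 <= binomr z j.
    by apply: binomr_ge0; apply: le_trans zj; rewrite ler_nat leq_pred.
  apply: ler_pM => //; first by rewrite subr_ge0.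
  by rewrite -natr1; lra.
have hS : \sum_(v < n) (j.+1)%:R * (d v)%:R <= \sum_(v < n) (x - (j.+1)%:R) * (d' v)%:R.
  by apply: ler_sum => v _; exact: claim.
rewrite -!mulr_sumr -!natr_sum /d /d' (degsum uG) (degsum (shadow_uniform (k:=j.+2) (G:=G))) in hS.
rewrite !natrM /= -/s in hS.
set t := x - (j.+1)%:R in hx' hS.
set m := #|G| in G0 hm hS.
have key : (j.+2)%:R * m%:R <= t * s%:R :> R.
  have hj : 0 < (j.+1)%:R :> R by rewrite ltr0n.
  rewrite -(ler_pM2l hj); apply: le_trans hS _; rewrite le_eqVlt; apply/orP; left; apply/eqP; ring.
have hb : (j.+2)%:R * binomr x j.+2 = binomr x j.+1 * t.
  by rewrite binomrS mulrC divfK // pnatr_eq0.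
have m1 : 1 <= m%:R :> R by rewrite ler1n.
have hj2 : 0 < (j.+2)%:R :> R by rewrite ltr0n.
case: (ltrgt0P t) hx' => // [tpos|t0] _.
  have : t * s%:R < t * binomr x j.+1 by rewrite ltr_pM2l.
  rewrite [t * binomr _ _]mulrC -hb; apply/negP; rewrite -leNgt; apply: le_trans key.
  by rewrite ler_pM2l.
by move: key; rewrite t0 mul0r; nra.
Qed.
End KK.

Section Anal.
Variable R : realType.

Lemma bern (u r : R) : 0 <= u -> 0 < r -> r < 1 -> u `^ r <= r * u + (1 - r).
Proof.
move=> u0 r0 r1.
have q0 : 0 < 1 - r by rewrite subr_gt0.
have ri : 0 < r^-1 by rewrite invr_gt0.
have qi : 0 < (1 - r)^-1 by rewrite invr_gt0.
have hE : r^-1^-1 + (1 - r)^-1^-1 = 1 by rewrite !invrK addrC subrK.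
have H : u `^ r * 1 <= (u `^ r) `^ r^-1 / r^-1 + 1 `^ (1 - r)^-1 / (1 - r)^-1.
  exact: (@conjugate_powR R (u `^ r) 1 r^-1 (1 - r)^-1 (powR_ge0 _ _) ler01 ri qi hE).
move: H; rewrite mulr1 -powRrM mulfV ?gt_eqF // powRr1 // powR1 mul1r !invrK.
by rewrite mulrC.
Qed.

Lemma powR_prod (T : finType) (A : {pred T}) (f : T -> R) (r : R) :
  (forall i, 0 <= f i) -> \prod_(i in A) (f i `^ r) = (\prod_(i in A) f i) `^ r.
Proof.
move=> f0.
suff [] : 0 <= \prod_(i in A) f i /\ \prod_(i in A) (f i `^ r) = (\prod_(i in A) f i) `^ r by [].
apply: (big_ind2 (fun b a => 0 <= b /\ a = b `^ r)) => //.
- by rewrite powR1.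
- move=> a1 b1 a2 b2 [h1 ->] [h2 ->]; split; first exact: mulr_ge0.
  by rewrite powRM.
Qed.

Lemma jensen (T : finType) (E : {set T}) (p : T -> R) (r : R) :
  (forall e, 0 <= p e) -> 0 < r -> r < 1 -> (0 < #|E|)%N ->
  \sum_(e in E) p e `^ r <= #|E|%:R * ((\sum_(e in E) p e) / #|E|%:R) `^ r.
Proof.
move=> p0 r0 r1 E0.
set P := \sum_(e in E) p e; set m := #|E|%:R.
have m0 : 0 < m by rewrite ltr0n.
have P0 : 0 <= P by rewrite sumr_ge0.
case: (eqVneq P 0) => [Pz | Pnz].
  rewrite big1 ?mulr_ge0 ?powR_ge0 ?ler0n // => e eE.
  by rewrite (psumr_eq0P _ Pz) // powR0 // gt_eqF.
set c := P / m.
have c0 : 0 < c by rewrite divr_gt0 // lt_def Pnz P0.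
apply: (le_trans (y := \sum_(e in E) c `^ r * (r * (p e / c) + (1 - r)))).
  apply: ler_sum => e _.
  have cn : c != 0 by rewrite gt_eqF.
  rewrite -{1}(divfK cn (p e)) powRM ?divr_ge0 ?(ltW c0) // mulrC.
  by rewrite ler_wpM2l ?powR_ge0 // bern // divr_ge0 // ltW.
rewrite -mulr_sumr big_split /= -mulr_sumr -mulr_suml sumr_const -/P.
have -> : P / c = m by rewrite /c; field; rewrite Pnz gt_eqF.
rewrite mulrC; apply: ler_wpM2r; first exact: powR_ge0.
by rewrite -[_ *+ _]mulr_natr -/m; lra.
Qed.

Lemma maclaurin (T : finType) (y : T -> R) : (forall i, 0 <= y i) -> forall k,
  (k`!)%:R * \sum_(S : {set T} | #|S| == k) \prod_(i in S) y i <= (\sum_i y i) ^+ k.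
Proof.
move=> y0; elim => [|k IH].
  under eq_bigl => S do rewrite cards_eq0.
  by rewrite big_pred1_eq big_set0 fact0 mulr1 expr0.
have sy0 : 0 <= \sum_i y i by rewrite sumr_ge0.
have Q0 : 0 <= \sum_(S : {set T} | #|S| == k) \prod_(i in S) y i.
  by rewrite sumr_ge0 // => S _; rewrite prodr_ge0.
apply: (le_trans (y := (k`!)%:R * ((\sum_i y i) * \sum_(S : {set T} | #|S| == k) \prod_(i in S) y i))); last first.
  by rewrite exprS mulrCA; apply: ler_wpM2l.
rewrite factS natrM -mulrA mulrCA; apply: ler_wpM2l => //; rewrite mulr_sumr.
have step1 : forall T0 : {set T}, #|T0| == k.+1 ->
    (k.+1)%:R * \prod_(i in T0) y i = \sum_(i in T0) (y i * \prod_(j in T0 :\ i) y j).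
  move=> T0 /eqP cT; rewrite -cT mulr_natl -sumr_const; apply: eq_bigr => i iT.
  by rewrite (big_setD1 _ iT).
rewrite (eq_bigr _ step1).
rewrite (exchange_big_dep predT) //=.
rewrite mulr_suml; apply: ler_sum => i _.
rewrite (reindex_onto (fun S => i |: S) (fun T0 => T0 :\ i)) /=; last first.
  by move=> T0 /andP[_ iT]; rewrite finset.setD1K.
rewrite mulr_sumr.
apply: (le_trans (y := \sum_(S : {set T} | (#|S| == k) && (i \notin S)) y i * \prod_(j in S) y j)).
  rewrite le_eqVlt; apply/orP; left; apply/eqP.
  apply: eq_big => S.
    case iS: (i \in S) => /=.
      rewrite andbF; apply/negbTE; apply/negP => /andP[_ /eqP h].
      by move: iS; rewrite -h finset.setD11.
    by rewrite finset.setU1K ?iS // eqxx finset.setU11 cardsU1 iS add1n eqSS !andbT.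
  by case/andP => _ /eqP ->.
rewrite big_mkcondr /=; apply: ler_sum => S _.
case: (i \notin S) => //; rewrite mulr_ge0 // prodr_ge0 //.
Qed.
End Anal.

Section Main.
Variable R : realType.

Lemma powRVb (t r : R) : 0 < t -> (t^-1) `^ r = (t `^ r)^-1.
Proof.
move=> t0.
have h : (t^-1) `^ r * t `^ r = 1 by rewrite -powRM ?invr_ge0 ?ltW // mulVf ?gt_eqF // powR1.
have hn : t `^ r != 0 by rewrite gt_eqF // powR_gt0.
by rewrite -[LHS]mulr1 -(mulfV hn) mulrA h mul1r.
Qed.

Lemma tau_bound n k (E : {set {set 'I_n}}) (a : R) (x : 'I_n -> R) :
  uniform k E -> (0 < #|E|)%N -> 1 < a -> anorm a x = 1 ->
  tauH k E x <= ((k`!)%:R * #|E|%:R) `^ (1 - a^-1).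
Proof.
move=> uE E0 a1 hx.
have a0 : 0 < a by apply: lt_trans a1.
set r := a^-1.
have r0 : 0 < r by rewrite invr_gt0.
have r1 : r < 1 by rewrite invf_lt1.
pose y i := `|x i| `^ a.
have y0 : forall i, 0 <= y i by move=> i; exact: powR_ge0.
have Sy : \sum_i y i = 1.
  move: hx; rewrite /anorm => h.
  have := congr1 (fun t => t `^ a) h; rewrite /= -powRrM mulVf ?gt_eqF // powRr1 ?sumr_ge0 //.
  by rewrite powR1.
have hxi : forall i, `|x i| = y i `^ r.
  by move=> i; rewrite /y -powRrM mulfV ?gt_eqF // powRr1.
rewrite /tauH.
apply: (le_trans (y := (k`!)%:R * \sum_(e in E) (\prod_(i in e) y i) `^ r)).
  apply: ler_wpM2l => //.
  apply: (le_trans (Num.Theory.ler_norm _)); apply: (le_trans (ler_norm_sum _ _ _)).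
  apply: ler_sum => e _; rewrite normr_prod -powR_prod //.
  by rewrite le_eqVlt; apply/orP; left; apply/eqP; apply: eq_bigr => i _; rewrite hxi.
pose p (e : {set 'I_n}) := \prod_(i in e) y i.
have p0 : forall e, 0 <= p e by move=> e; apply: prodr_ge0.
have hJ := jensen p0 r0 r1 E0.
set K := ((k`!)%:R : R); set M := (#|E|%:R : R).
have K0 : 0 < K by rewrite ltr0n fact_gt0.
have M0 : 0 < M by rewrite ltr0n.
have hP : \sum_(e in E) p e <= K^-1.
  have hM := maclaurin y0 k; rewrite Sy expr1n in hM.
  have hsub : \sum_(e in E) p e <= \sum_(S : {set 'I_n} | #|S| == k) p S.
    rewrite big_mkcond [X in _ <= X]big_mkcond /=; apply: ler_sum => S _.
    case SE: (S \in E); first by rewrite (uE S SE) eqxx.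
    by case: (_ == _) => //; apply: prodr_ge0.
  rewrite -(ler_pM2l K0) mulfV ?gt_eqF //; apply: le_trans hM.
  by apply: ler_wpM2l => //; apply: ltW.
have KM0 : 0 < K * M by apply: mulr_gt0.
apply: (le_trans (y := K * (M * ((K * M)^-1) `^ r))).
  apply: ler_wpM2l; first exact: ltW.
  apply: (le_trans hJ); rewrite -/M; apply: ler_wpM2l; first exact: ltW.
  apply: ge0_ler_powR; first exact: ltW.
  - by rewrite nnegrE divr_ge0 ?sumr_ge0 // ltW.
  - by rewrite nnegrE invr_ge0 ltW.
  by rewrite invfM; apply: ler_wpM2r => //; rewrite invr_ge0 ltW.
rewrite powRVb // powRB; last by apply/implyP => _; rewrite gt_eqF.
by rewrite powRr1 ?(ltW KM0) // mulrA.
Qed.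
End Main.

Theorem corollary6 (R : realType) (n k : nat) (E : {set {set 'I_n}})
    (a x : R) :
  (1 <= k)%N -> uniform k E -> (0 < #|E|)%N ->
  1 < a -> (k.-1)%:R <= x ->
  ((k`!)%:R * binomr x k) `^ (1 - a^-1) <= lambda_alpha k a E ->
  binomr x k.-1 <= (#|shadow k E|)%:R.
Proof.
move=> k1 uE E0 a1 hx hl.
set K := ((k`!)%:R : R); set M := (#|E|%:R : R).
have K0 : 0 < K by rewrite ltr0n fact_gt0.
have a0 : 0 < a by apply: lt_trans a1.
have r0 : 0 < 1 - a^-1 by rewrite subr_gt0 invf_lt1.
have Hl : lambda_alpha k a E <= (K * M) `^ (1 - a^-1).
  rewrite /lambda_alpha.
  set A := (X in sup X <= _).
  have [A0|/set0P An] := eqVneq A set0.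
    by rewrite A0 sup0 powR_ge0.
  apply: ge_sup An _ => t [y [hy ->]]; exact: tau_bound.
have hC0 : 0 <= binomr x k by apply: binomr_ge0.
have hC : binomr x k <= M.
  rewrite leNgt; apply/negP => hlt.
  have : K * M < K * binomr x k by rewrite ltr_pM2l.
  move/(gt0_ltr_powR r0); rewrite !nnegrE => /(_ (mulr_ge0 (ltW K0) (ler0n _ _)) (mulr_ge0 (ltW K0) hC0)).
  move=> h; have := le_lt_trans (le_trans hl Hl) h; by rewrite ltxx.
case: k k1 uE hx hl hC hC0 K K0 Hl => [//|j] _ uE hx _ hC _ _ _ _ /=.
exact: KK uE E0 hx hC.
Qed.
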